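(* Let $G$ and $H$ be finite groups and let $\pi$ be a set of primes. Suppose that $G$ has a hypercentral Hall $\pi$-subgroup. Suppose further that for every positive integer $n$, the number of conjugacy classes of $\pi$-elements of $G$ of size $n$ equals the number of conjugacy classes of $\pi$-elements of $H$ of size $n$. Then $H$ has a hypercentral Hall $\pi$-subgroup.
   Context: A $\pi$-element of a group is an element whose order is divisible only by primes in $\pi$. The hypercentre $\mathbf{Z}_\infty(G)$ of $G$ is the last term of the upper central series $1\le \mathbf{Z}_1(G)\le \mathbf{Z}_2(G)\le\cdots$, where $\mathbf{Z}_1(G)=\mathbf{Z}(G)$ and $\mathbf{Z}_{i+1}(G)/\mathbf{Z}_i(G)=\mathbf{Z}(G/\mathbf{Z}_i(G))$. A subgroup is hypercentral in $G$ if it is contained in $\mathbf{Z}_\infty(G)$. The size of the conjugacy class of $g$ is $|G:C_G(g)|$. *)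

(* Defs.v *)
From mathcomp Require Import all_boot all_fingroup all_solvable.
Set Implicit Arguments. Unset Strict Implicit. Unset Printing Implicit Defensive.
Local Open Scope group_scope.

(* The hypercentre Z_oo(G): last term of the upper central series. For a finite
   group the series stabilises, so A is hypercentral iff A \subset 'Z_n(G)
   for some n. *)
Definition hypercentral (gT : finGroupType) (G A : {set gT}) : Prop :=
  exists n : nat, A \subset 'Z_n(G).

Definition num_pi_classes (gT : finGroupType) (pi : nat_pred) (G : {set gT})
    (n : nat) : nat :=
  #|[set C in classes G | pi.-elt (repr C) && (#|C| == n)]|.

(* Main.v *)
Require Import Defs.
From mathcomp Require Import all_boot all_fingroup all_solvable.
Set Implicit Arguments. Unset Strict Implicit. Unset Printing Implicit Defensive.
Local Open Scope group_scope.

Lemma L3 (gT : finGroupType) (p : nat) (x s c : gT) :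
  p.-elt c -> p^'.-elt s -> commute c s -> x ^ s = x * c -> c = 1.
Proof.
move=> pc ps csc xs.
have Ej : forall j, x ^ (s ^+ j) = x * c ^+ j.
  elim=> [|j IH]; first by rewrite !expg0 conjg1 mulg1.
  have e : (c ^+ j) ^ s = c ^+ j.
    by apply/conjg_fixP/commgP; apply: commute_sym; apply: commuteX; apply: commute_sym.
  by rewrite expgSr conjgM IH conjMg xs e expgS mulgA.
have := Ej #[s]; rewrite expg_order conjg1 => E.
have ceq : c ^+ #[s] = 1 by apply: (mulgI x); rewrite mulg1 -E.
have dvd : #[c] %| #[s] by rewrite order_dvdn ceq.
have cop : coprime #[c] #[s] by apply: (pnat_coprime pc).
apply/eqP; rewrite -order_eq1.
by rewrite -dvdn1 -(eqnP cop) dvdn_gcd dvdnn dvd.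
Qed.

Lemma L1 (gT : finGroupType) (G C : {group gT}) (p : nat) :
  C \subset G ->
  (forall q, prime q -> q != p -> exists2 S : {group gT}, q.-Sylow(G) S & S \subset C) ->
  p.-nat #|G : C|.
Proof.
move=> sCG hS; apply/(pnatP _ (indexg_gt0 G C)).
move=> q pq qdiv; rewrite inE; apply/negPn/negP => qp.
have [S sylS sSC] := hS q pq qp.
case/and3P: sylS => sSG _ q'iS.
have: q \in q^'.
  apply: (pnatP _ (indexg_gt0 G S) q'iS) => //.
  by rewrite -(Lagrange_index sCG sSC) dvdn_mulr.
by rewrite !inE eqxx.
Qed.

Lemma L2 (gT : finGroupType) (G C : {group gT}) (p q : nat) :
  C \subset G -> p.-nat #|G : C| -> prime q -> q != p ->
  exists2 S : {group gT}, q.-Sylow(G) S & S \subset C.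
Proof.
move=> sCG pC pq qp.
have [S sylS] := Sylow_exists q C.
exists S => //; last by case/and3P: sylS.
case/and3P: sylS => sSC qS q'iS.
rewrite /pHall (subset_trans sSC sCG) qS /= -(Lagrange_index sCG sSC) pnatM q'iS andbT.
apply: sub_in_pnat pC => r _; rewrite !inE => /eqP ->; by rewrite eq_sym.
Qed.

Lemma Q2 (gT : finGroupType) (pi : nat_pred) (K : {group gT}) (x : gT) :
  pi.-group K -> x \in 'N(K) -> pi.-elt (coset K x) = pi.-elt x.
Proof.
move=> piK nKx.
have sxN : <[x]> \subset 'N(K) by rewrite cycle_subG.
have := pquotient_pgroup piK sxN.
by rewrite quotient_cycle.
Qed.

Lemma Q1 (gT : finGroupType) (p : nat) (X K : {group gT}) (x : gT) :
  prime p -> K \subset 'Z(X) -> p.-group K -> x \in X ->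
  p.-nat #|x ^: X| = p.-nat #|coset K x ^: (X / K)|.
Proof.
move=> pp sKZ pK Xx.
have sKX : K \subset X by apply: subset_trans sKZ (center_sub X).
have nKX : X \subset 'N(K).
  apply: subset_trans (cent_sub K); rewrite centsC.
  by apply: subset_trans sKZ (subsetIr _ _).
have nKx : x \in 'N(K) by apply: (subsetP nKX).
rewrite -!index_cent1.
apply/idP/idP => hx.
- apply: L1; first by apply: subsetIl.
  move=> q pq qp.
  have [S sylS sSC] := L2 (subsetIl X 'C[x]) hx pq qp.
  exists (S / K)%G.
    apply: quotient_pHall => //.
    by apply: subset_trans nKX; case/andP: sylS.
  apply: subset_trans (quotient_subcent1 K X x).
  exact: quotientS.
- apply: L1; first by apply: subsetIl.
  move=> q pq qp.
  have [Sb sylSb sSbC] := L2 (subsetIl _ _) hx pq qp.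
  have [S sylS] := Sylow_exists q X.
  have sSX : S \subset X by case/andP: sylS.
  have sylSK : q.-Sylow(X / K) (S / K) by apply: quotient_pHall => //; apply: subset_trans nKX.
  have [yb Xyb defSb] := Sylow_trans sylSK sylSb.
  case/morphimP: Xyb => y Ny Xy defyb.
  exists (S :^ y)%G; first by rewrite pHallJ.
  apply/subsetP => s Ss.
  have sSyX : S :^ y \subset X by rewrite sub_conjg conjGid ?groupV.
  have Xs := subsetP sSyX s Ss.
  have nKs := subsetP nKX s Xs.
  have : coset K s \in 'C_(X / K)[coset K x].
    apply: (subsetP sSbC); rewrite defSb defyb -quotientJ //.
    exact: (mem_quotient K Ss).
  case/setIP => _ /cent1P comm.
  have cK : [~ x, s] \in K.
    apply: coset_idr; first by apply: groupR.
    rewrite morphR //; apply/eqP/commgP; exact: commute_sym comm.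
  have cZ : [~ x, s] \in 'Z(X) := subsetP sKZ _ cK.
  have cs : commute [~ x, s] s by case/centerP: cZ => _ /(_ s Xs).
  have qs : q.-elt s.
    by apply: (mem_p_elt _ Ss); rewrite /pgroup cardJg; case/and3P: sylS.
  have p's : p^'.-elt s.
    by apply: sub_p_elt qs => r; rewrite !inE => /eqP ->.
  have c1 := L3 (mem_p_elt pK cK) p's cs (conjg_mulR x s).
  rewrite inE Xs; apply/cent1P; apply: commute_sym; apply/commgP; by rewrite c1.
Qed.


Lemma card_cosetpre (gT : finGroupType) (K : {group gT}) (C : {set coset_of K}) :
  #|coset K @*^-1 C| = (#|K| * #|C|)%N.
Proof.
rewrite -sum1_card (partition_big (coset K) (mem C)); last first.
  by move=> x; rewrite !inE => /andP[].
rewrite /= mulnC -sum_nat_const; apply: eq_bigr => xb Cxb.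
rewrite sum1_card.
have E : [set i | (i \in coset K @*^-1 C) && (coset K i == xb)] = xb :> {set gT}.
  apply/setP => x; rewrite inE; apply/idP/idP.
    case/andP=> /morphpreP[Nx _] /eqP <-.
    by rewrite val_coset // rcoset_refl.
  move=> xbx; have Nx : x \in 'N(K) by apply: (subsetP (coset_norm xb)).
  by rewrite (coset_mem xbx) eqxx andbT; apply: mem_morphpre => //; rewrite /= (coset_mem xbx).
rewrite -[LHS]cardsE /= E.
have [y Ny ->] := cosetP xb.
by rewrite val_coset // card_rcoset.
Qed.

Definition Wp (gT : finGroupType) (pi : nat_pred) (p : nat) (X : {set gT}) : {set gT} :=
  [set x in X | pi.-elt x && p.-nat #|x ^: X|].

Lemma WpJ (gT : finGroupType) pi p (X : {group gT}) x g :
  g \in X -> (x ^ g \in Wp pi p X) = (x \in Wp pi p X).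
Proof. by move=> Xg; rewrite !inE groupJr // p_eltJ classGidl. Qed.

Lemma Wp_quo (gT : finGroupType) (pi : nat_pred) (p : nat) (X K : {group gT}) :
  prime p -> p \in pi -> K \subset 'Z(X) -> p.-group K ->
  Wp pi p X = coset K @*^-1 (Wp pi p (X / K)).
Proof.
move=> pp pip sKZ pK.
have sKX : K \subset X by apply: subset_trans sKZ (center_sub X).
have nKX : X \subset 'N(K).
  apply: subset_trans (cent_sub K); rewrite centsC.
  by apply: subset_trans sKZ (subsetIr _ _).
have nsKX : K <| X by rewrite /normal sKX nKX.
have piK : pi.-group K by apply: sub_pgroup pK => r; rewrite inE => /eqP ->.
apply/setP => x; rewrite /Wp; apply/idP/morphpreP.
  rewrite inE => /andP[Xx /andP[pix cx]].
  have Nx := subsetP nKX x Xx.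
  split=> //; rewrite /= inE (mem_quotient K Xx) /= (Q2 piK Nx) pix /=.
  by rewrite -(Q1 pp sKZ pK Xx).
case=> Nx /setIdP[XKx /andP[pix cx]].
have Xx : x \in X by rewrite -(quotientGK nsKX); apply/morphpreP.
by rewrite inE Xx -(Q2 piK Nx) pix /= (Q1 pp sKZ pK Xx).
Qed.

Lemma card_Wp_quo (gT : finGroupType) (pi : nat_pred) (p : nat) (X K : {group gT}) :
  prime p -> p \in pi -> K \subset 'Z(X) -> p.-group K ->
  #|Wp pi p X| = (#|K| * #|Wp pi p (X / K)|)%N.
Proof. by move=> pp pip sKZ pK; rewrite (Wp_quo pp pip sKZ pK) card_cosetpre. Qed.

Lemma Zpi_card (gT : finGroupType) (pi : nat_pred) (X : {group gT}) :
  #|[set x in 'Z(X) | pi.-elt x]| %| #|'Z(X)|.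
Proof.
have hall := nilpotent_pcore_Hall pi (abelian_nil (center_abelian X)).
have -> : [set x in 'Z(X) | pi.-elt x] = 'O_pi('Z(X)).
  apply/setP => x; rewrite inE.
  case Zx: (x \in 'Z(X)) => /=.
    by rewrite (mem_normal_Hall hall (pcore_normal _ _) Zx).
  by apply/esym/negbTE; apply: contraFN Zx; apply: (subsetP (pcore_sub _ _)).
exact: cardSg (pcore_sub _ _).
Qed.

Lemma Wp_base (gT : finGroupType) (pi : nat_pred) (p : nat) (X : {group gT}) :
  prime p -> ~~ (p %| #|'Z(X)|) -> ~~ (p %| #|Wp pi p X|).
Proof.
move=> pp pZ.
have [T sylT] := Sylow_exists p X.
have sTX : T \subset X by case/andP: sylT.
have actT : [acts T, on Wp pi p X | 'J].
  rewrite astabsJ; apply/subsetP => t Tt; rewrite inE.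
  apply/subsetP => y; rewrite mem_conjg => Wy.
  have Xt := subsetP sTX t Tt.
  by rewrite -(conjgKV t y) WpJ.
have E := pgroup_fix_mod (pHall_pgroup sylT) actT.
have EF : 'Fix_(Wp pi p X | 'J)(T) = [set x in 'Z(X) | pi.-elt x].
  apply/setP => x; rewrite !inE.
  case Xx: (x \in X) => //=.
  case: (pi.-elt x); rewrite ?andbF ?andbT //.
  apply/idP/idP.
    case/andP=> cx sTf.
    have sTC : T \subset 'C_X[x].
      apply/subsetP => t Tt; rewrite inE (subsetP sTX t Tt) /=.
      have := subsetP sTf t Tt; rewrite inE => /eqP/conjg_fixP/commgP ct.
      by apply/cent1P; apply: commute_sym.
    have p'i : p^'.-nat #|X : 'C_X[x]|.
      case/and3P: sylT => _ _ q'i.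
      by apply: pnat_dvd q'i; rewrite -(Lagrange_index (subsetIl _ _) sTC) dvdn_mulr.
    rewrite -index_cent1 in cx.
    have i1 := pnat_1 cx p'i.
    have : X \subset 'C_X[x] by rewrite -indexg_eq1 i1.
    by rewrite subsetI subxx /= sub_cent1.
  move=> cXx; have sXC : X \subset 'C[x] by rewrite sub_cent1.
  rewrite -index_cent1 (setIidPl sXC) indexgg; apply/andP; split=> //.
  apply/subsetP => t Tt; rewrite inE; apply/eqP/conjg_fixP/commgP.
  by apply: commute_sym; apply/cent1P; apply: (subsetP sXC); apply: (subsetP sTX).
apply: contra pZ => dW.
apply: dvdn_trans (Zpi_card pi X).
by rewrite -EF /dvdn -E.
Qed.

Lemma logn_ndvd p n : ~~ (p %| n) -> logn p n = 0.
Proof.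
move=> h; apply/eqP; rewrite -leqn0 leqNgt logn_gt0 mem_primes.
by rewrite (negbTE h) !andbF.
Qed.

Lemma Wp1 (gT : finGroupType) (pi : nat_pred) p (X : {group gT}) : 1 \in Wp pi p X.
Proof. by rewrite inE group1 p_elt1 class1G cards1. Qed.

Lemma logn_Wp (p : nat) (pi : nat_pred) : prime p -> p \in pi ->
  forall (gT : finGroupType) (X : {group gT}),
  logn p #|Wp pi p X| = logn p #|Wp p p X|.
Proof.
move=> pp pip gT X.
move: {2}#|X| (leqnn #|X|) => n.
elim: n gT X => [|n IH] gT X leX.
  by move: (cardG_gt0 X); rewrite lt0n -leqn0 leX.
have ppp : p \in (p : nat_pred) by rewrite inE.
have [pZ|pZ] := boolP (p %| #|'Z(X)|); last first.
  by rewrite !logn_ndvd // Wp_base.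
have [z Zz oz] := Cauchy pp pZ.
have sKZ : <[z]> \subset 'Z(X) by rewrite cycle_subG.
have pK : p.-group <[z]> by rewrite /pgroup -/(order z) oz pnat_id.
rewrite (card_Wp_quo pp pip sKZ pK) (card_Wp_quo pp ppp sKZ pK).
have W0 : forall (rT : finGroupType) (pi' : nat_pred) (Y : {group rT}), 0 < #|Wp pi' p Y|.
  by move=> rT pi' Y; apply/card_gt0P; exists 1; apply: Wp1.
rewrite -/(order z) oz !lognM ?W0 ?prime_gt0 //.
congr (_ + _); apply: IH.
have sKX : <[z]> \subset X by apply: subset_trans sKZ (center_sub X).
have nKX : X \subset 'N(<[z]>).
  apply: subset_trans (cent_sub _); rewrite centsC.
  by apply: subset_trans sKZ (subsetIr _ _).
rewrite card_quotient // -ltnS; apply: leq_trans leX.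
rewrite -(Lagrange sKX) -/(order z) oz.
by apply: ltn_Pmull; [apply: prime_gt1 | apply: indexg_gt0].
Qed.

Lemma Wp_pcore (gT : finGroupType) (p : nat) (X : {group gT}) :
  Wp p p X \subset 'O_p(X).
Proof.
apply/subsetP => u; rewrite inE => /and3P[Xu pu cu].
have sUX : <[u]> \subset X by rewrite cycle_subG.
have [T sylT sUT] := Sylow_superset sUX pu.
have sTX : T \subset X by case/andP: sylT.
have Tu : u \in T by rewrite -cycle_subG.
have mulCT : 'C_X[u] * T = X.
  apply: coprime_index_mulG (subsetIl _ _) sTX _.
  rewrite index_cent1; apply: (pnat_coprime cu).
  by case/and3P: sylT.
have sClT : u ^: X \subset T.
  apply/subsetP => y /imsetP[g Xg ->].
  move: Xg; rewrite -mulCT => /mulsgP[c t Cc Tt ->].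
  have uc : u ^ c = u.
    by apply/conjg_fixP/commgP; apply: commute_sym; apply/cent1P; case/setIP: Cc.
  by rewrite conjgM uc groupJ.
have nsN : <<u ^: X>> <| X.
  by rewrite /normal gen_subG class_subG //= norms_gen ?class_norm.
have pN : p.-group <<u ^: X>>.
  by apply: pgroupS (pHall_pgroup sylT); rewrite gen_subG.
apply: (subsetP (pcore_max pN nsN)).
by apply: mem_gen; apply: class_refl.
Qed.
Lemma class_repr (gT : finGroupType) (X : {group gT}) C :
  C \in classes X -> exists2 y, y \in X & (C = y ^: X /\ repr C \in C).
Proof.
case/imsetP=> y Xy ->; exists y => //; split=> //.
by apply: mem_repr (class_refl X y).
Qed.

Lemma count_classes (gT : finGroupType) (pi : nat_pred) (X : {group gT})
    (Qn : pred nat) (B : nat) : #|X| < B.+1 ->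
  #|[set x in X | pi.-elt x && Qn #|x ^: X|]| =
  (\sum_(n < B.+1 | Qn n) n * num_pi_classes pi X n)%N.
Proof.
move=> ltXB.
set S := [set x in X | _].
set P := [set C in classes X | pi.-elt (repr C) && Qn #|C|].
have covP : cover P = S.
  apply/setP => x; apply/bigcupP/idP.
    case=> C; rewrite inE => /andP[clC /andP[pic qC]] Cx.
    have [y Xy [defC rC]] := class_repr clC.
    move: Cx rC pic qC; rewrite defC => /imsetP[g Xg ->] /imsetP[h Xh ->].
    rewrite !p_eltJ => piy qy.
    by rewrite inE groupJ // p_eltJ piy classGidl.
  rewrite inE => /andP[Xx /andP[pix qx]].
  exists (x ^: X) => //; last exact: class_refl.
  rewrite inE mem_classes //=.
  have := mem_repr _ (class_refl X x).
  case/imsetP=> g Xg ->; by rewrite p_eltJ pix.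
have tiP : trivIset P.
  apply: (@trivIsetS _ _ (classes X)); last by case/and3P: (classes_partition X).
  by apply/subsetP => C; rewrite inE => /andP[].
rewrite -covP -sum1_card big_trivIset //=.
have ltCB : forall C, C \in classes X -> #|C| < B.+1.
  move=> C /imsetP[y Xy ->]; apply: leq_ltn_trans ltXB.
  by apply: subset_leq_card; apply: class_subG.
under eq_bigr do rewrite sum1_card.
rewrite (partition_big (fun C : {set gT} => (inord #|C| : 'I_B.+1)) Qn); last first.
  by move=> C; rewrite inE => /andP[clC /andP[_ qC]]; rewrite inordK ?ltCB.
apply: eq_bigr => n qn.
rewrite /num_pi_classes mulnC -sum_nat_const.
apply: eq_big => C.
  rewrite !inE; case clC: (C \in classes X) => //=.
  case: (pi.-elt (repr C)) => //=.
  apply/idP/idP.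
    case/andP=> _ /eqP <-; rewrite inordK ?ltCB //.
  by move=> /eqP eCn; rewrite eCn qn inord_val eqxx.
rewrite inE => /andP[/andP[clC _] /eqP <-]; by rewrite inordK ?ltCB.
Qed.

Lemma pnat_leq_dvd p m n : prime p -> p.-nat m -> p.-nat n -> m <= n -> m %| n.
Proof.
move=> pp pm pn le.
rewrite -(part_pnat_id pm) -(part_pnat_id pn) !p_part in le *.
by rewrite dvdn_exp2l // -(leq_exp2l _ _ (prime_gt1 pp)).
Qed.

Lemma Zk_sub (gT : finGroupType) (A H : {group gT}) :
  A \subset H ->
  (forall a h, a \in A -> h \in H -> exists2 t, t \in A & a ^ h = a ^ t) ->
  forall k, 'Z_k(A) \subset 'Z_k(H).
Proof.
move=> sAH hA; elim=> [|k IH]; first by rewrite !ucn0.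
apply/subsetP => x; rewrite ucnSnR inE => /andP[Ax sxA].
rewrite ucnSnR inE (subsetP sAH x Ax) /= gen_subG.
apply/subsetP => y /imset2P[x' h /set1P -> Hh ->].
have [t At xht] := hA x h Ax Hh.
rewrite commgEl xht -commgEl.
apply: (subsetP IH); apply: (subsetP sxA).
by apply: mem_commg; rewrite ?set11.
Qed.

Lemma conj_in_Sylow (gT : finGroupType) (r : nat) (A H : {group gT}) a h :
  r.-Sylow(H) A -> a \in H -> r.-nat #|a ^: H| -> h \in H ->
  exists2 t, t \in A & a ^ h = a ^ t.
Proof.
move=> sylA Ha ra Hh.
have sAH : A \subset H by case/andP: sylA.
have mulCA : 'C_H[a] * A = H.
  apply: coprime_index_mulG (subsetIl _ _) sAH _.
  rewrite index_cent1; apply: (pnat_coprime ra).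
  by case/and3P: sylA.
move: Hh; rewrite -mulCA => /mulsgP[c t Cc At ->].
exists t => //.
have ac : a ^ c = a.
  by apply/conjg_fixP/commgP; apply: commute_sym; apply/cent1P; case/setIP: Cc.
by rewrite conjgM ac.
Qed.

Lemma G_Rp (gT : finGroupType) (G P : {group gT}) (pi : nat_pred) (n p : nat) :
  pi.-Hall(G) P -> P \subset 'Z_n(G) -> prime p -> p \in pi ->
  #|Wp p p G| = (#|G|`_p)%N.
Proof.
move=> hallP sPZ pp pip.
have nilZ : nilpotent 'Z_n(G) := ucn_nilpotent n G.
have nsZG : 'Z_n(G) <| G := ucn_normal n G.
have sZG : 'Z_n(G) \subset G := ucn_sub n G.
have nsBG : 'O_p('Z_n(G)) <| G := char_normal_trans (pcore_char p _) nsZG.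
have pB : p.-group 'O_p('Z_n(G)) := pcore_pgroup p _.
have sBZ : 'O_p('Z_n(G)) \subset 'Z_n(G) := pcore_sub p _.
have comm : forall g, g \in G -> p^'.-elt g ->
    forall k b, b \in 'O_p('Z_n(G)) :&: 'Z_k(G) -> commute b g.
  move=> g Gg p'g; elim=> [|k IH] b.
    by rewrite ucn0 => /setIP[_ /set1P ->]; apply: commute_sym; apply: commute1.
  case/setIP => Bb Zb.
  have Gb : b \in G by apply: (subsetP (ucn_sub k.+1 G)).
  have cZ : [~ b, g] \in 'Z_k(G) by apply: (subsetP (ucn_comm k G)); apply: mem_commg.
  have cB : [~ b, g] \in 'O_p('Z_n(G)).
    by rewrite commgEl groupM ?groupV // memJ_norm // (subsetP (normal_norm nsBG)).
  have cg : commute [~ b, g] g by apply: IH; rewrite inE cB cZ.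
  have c1 := L3 (mem_p_elt pB cB) p'g cg (conjg_mulR b g).
  by apply/commgP; rewrite c1.
have sWB : 'O_p('Z_n(G)) \subset Wp p p G.
  apply/subsetP => b Bb.
  have Gb : b \in G by apply: (subsetP (subset_trans sBZ sZG)).
  rewrite inE Gb (mem_p_elt pB Bb) /= -index_cent1.
  apply: L1 (subsetIl _ _) _ => q pq qp.
  have [S sylS] := Sylow_exists q G.
  exists S => //.
  apply/subsetP => s Ss.
  have Gs : s \in G by apply: (subsetP (pHall_sub sylS)).
  rewrite inE Gs; apply/cent1P; apply: commute_sym.
  apply: (comm s Gs _ n b); last by rewrite inE Bb (subsetP sBZ b Bb).
  apply: sub_p_elt (mem_p_elt (pHall_pgroup sylS) Ss) => r.
  by rewrite !inE => /eqP ->.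
have cardB : #|'O_p('Z_n(G))| = (#|G|`_p)%N.
  rewrite (card_Hall (nilpotent_pcore_Hall p nilZ)).
  apply/eqP; rewrite eqn_dvd; apply/andP; split.
    exact: partn_dvd (cardG_gt0 G) (cardSg sZG).
  have hP := card_Hall hallP.
  have spi : {subset (p : nat_pred) <= pi} by move=> r; rewrite inE => /eqP ->.
  rewrite -(partn_part _ spi) -hP.
  exact: partn_dvd (cardG_gt0 _) (cardSg sPZ).
have le1 : (#|G|`_p)%N <= #|Wp p p G| by rewrite -cardB subset_leq_card.
have le2 : #|Wp p p G| <= (#|G|`_p)%N.
  apply: leq_trans (subset_leq_card (Wp_pcore p G)) _.
  apply: dvdn_leq; first exact: part_gt0.
  rewrite -(part_pnat_id (pcore_pgroup p G)).
  exact: partn_dvd (cardG_gt0 _) (cardSg (pcore_sub _ _)).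
by apply/eqP; rewrite eqn_leq le2 le1.
Qed.

Unset Implicit Arguments.
Set Strict Implicit.

Theorem theoremA (gT rT : finGroupType) (G : {group gT}) (H : {group rT})
    (pi : nat_pred) :
  (exists P : {group gT}, pi.-Hall(G) P /\ hypercentral G P) ->
  (forall n : nat, 0 < n -> num_pi_classes pi G n = num_pi_classes pi H n) ->
  exists Q : {group rT}, pi.-Hall(H) Q /\ hypercentral H Q.
Proof.
move=> [P [hallP [n sPZ]]] hcount.
pose B := maxn #|G| #|H|.
have cnt : forall Qn : pred nat,
    #|[set x in G | pi.-elt x && Qn #|x ^: G|]| = #|[set x in H | pi.-elt x && Qn #|x ^: H|]|.
  move=> Qn.
  rewrite (@count_classes _ _ _ _ B) ?ltnS ?leq_maxl //.
  rewrite (@count_classes _ _ _ _ B) ?ltnS ?leq_maxr //.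
  apply: eq_bigr => k _.
  have [->|kpos] := posnP k; first by rewrite !mul0n.
  by rewrite hcount.
have nilZ : nilpotent 'Z_n(G) := ucn_nilpotent n G.
have nsZG : 'Z_n(G) <| G := ucn_normal n G.
have sZG : 'Z_n(G) \subset G := ucn_sub n G.
have hallPZ : pi.-Hall('Z_n(G)) P := pHall_subl sPZ sZG hallP.
have defP : P :=: 'O_pi('Z_n(G)) := eq_Hall_pcore (nilpotent_pcore_Hall pi nilZ) hallPZ.
have nsPG : P <| G by rewrite defP; apply: char_normal_trans (pcore_char pi _) nsZG.
have NG : #|[set x in H | pi.-elt x && predT #|x ^: H|]| = (#|G|`_pi)%N.
  have eqS : [set x in G | pi.-elt x && predT #|x ^: G|] = P.
    apply/setP => x; rewrite inE andbT.
    case Gx: (x \in G) => /=; first by rewrite (mem_normal_Hall hallP nsPG Gx).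
    by apply/esym/negbTE; apply: contraFN Gx; apply: (subsetP (pHall_sub hallP)).
  by rewrite -cnt eqS (card_Hall hallP).
have keyH : forall p, prime p -> p \in pi ->
    (#|G|`_p)%N <= #|Wp p p H|.
  move=> p pp pip.
  have ppp : p \in (p : nat_pred) by rewrite inE.
  have e1 : logn p #|Wp p p H| = logn p #|G|.
    rewrite -(logn_Wp pp pip) -[Wp pi p H]/([set x in H | pi.-elt x && p.-nat #|x ^: H|]).
    rewrite -(cnt (fun k => p.-nat k)) -[[set x in G | _]]/(Wp pi p G).
    by rewrite (logn_Wp pp pip) (G_Rp hallP sPZ pp pip) logn_part.
  rewrite p_part -e1; apply: dvdn_leq; last exact: pfactor_dvdnn.
  by apply/card_gt0P; exists 1; apply: Wp1.
have OpH : forall p, prime p -> p \in pi -> (#|G|`_p)%N %| #|'O_p(H)|.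
  move=> p pp pip; apply: (pnat_leq_dvd pp (part_pnat _ _) (pcore_pgroup p H)).
  exact: leq_trans (keyH p pp pip) (subset_leq_card (Wp_pcore p H)).
have piprime : forall (r m : nat) (rho : nat_pred), r \in \pi((m`_rho)%N) -> prime r /\ r \in rho.
  move=> r m rho rin; split; last exact: pnatPpi (part_pnat _ _) rin.
  by move: rin; rewrite mem_primes => /andP[].
have subr : forall r : nat, r \in pi -> {subset (r : nat_pred) <= pi}.
  by move=> r rpi s; rewrite inE => /eqP ->.
have dvdGQ : (#|G|`_pi)%N %| #|'O_pi(H)|.
  apply/dvdn_partP => [|r rin]; first exact: part_gt0.
  have [pr rpi] := piprime _ _ _ rin.
  rewrite partn_part; last exact: subr.
  have d1 := OpH r pr rpi.
  have d2 : 'O_r(H) \subset 'O_pi(H) by apply: sub_pcore; exact: subr.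
  exact: dvdn_trans d1 (cardSg d2).
have sQS : 'O_pi(H) \subset [set x in H | pi.-elt x && predT #|x ^: H|].
  apply/subsetP => x Qx; rewrite inE (subsetP (pcore_sub _ _) x Qx) andbT.
  exact: mem_p_elt (pcore_pgroup _ _) Qx.
have cardQ : #|'O_pi(H)| = (#|G|`_pi)%N.
  apply/eqP; rewrite eqn_leq (dvdn_leq (cardG_gt0 _) dvdGQ) andbT -NG.
  exact: subset_leq_card sQS.
have piQ : forall x, x \in H -> pi.-elt x -> x \in 'O_pi(H).
  have eqQS : 'O_pi(H) = [set x in H | pi.-elt x && predT #|x ^: H|] :> {set rT}.
    by apply/eqP; rewrite eqEcard sQS NG cardQ /=.
  by move=> x Hx pix; rewrite eqQS inE Hx pix.
have hallQ : pi.-Hall(H) 'O_pi(H).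
  rewrite pHallE pcore_sub eqn_dvd /=; apply/andP; split.
    rewrite -(part_pnat_id (pcore_pgroup pi H)).
    exact: partn_dvd (cardG_gt0 _) (cardSg (pcore_sub _ _)).
  apply/dvdn_partP => [|r rin]; first exact: part_gt0.
  have [pr rpi] := piprime _ _ _ rin.
  rewrite partn_part; last exact: subr.
  have [S sylS] := Sylow_exists r H.
  rewrite -(card_Hall sylS); apply: cardSg.
  apply/subsetP => x Sx; apply: piQ; first exact: (subsetP (pHall_sub sylS)).
  exact: sub_p_elt (subr r rpi) (mem_p_elt (pHall_pgroup sylS) Sx).
have cardHr : forall r, r \in pi -> (#|H|`_r)%N = (#|G|`_r)%N.
  move=> r rpi.
  rewrite -(partn_part _ (subr r rpi)) -[(#|G|`_r)%N](partn_part _ (subr r rpi)).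
  by rewrite -(card_Hall hallQ) cardQ.
pose m := #|H|.
have Ar : forall r, prime r -> r \in pi ->
    #|'O_r(H)| = (#|H|`_r)%N /\ 'O_r(H) \subset 'Z_m(H).
  move=> r pr rpi.
  have le1 : #|'O_r(H)| <= (#|H|`_r)%N.
    apply: dvdn_leq; first exact: part_gt0.
    rewrite -(part_pnat_id (pcore_pgroup r H)).
    exact: partn_dvd (cardG_gt0 _) (cardSg (pcore_sub _ _)).
  have le2 : (#|H|`_r)%N <= #|Wp r r H| by rewrite cardHr // keyH.
  have le3 : #|Wp r r H| <= #|'O_r(H)| := subset_leq_card (Wp_pcore r H).
  have cA : #|'O_r(H)| = (#|H|`_r)%N.
    by apply/eqP; rewrite eqn_leq le1 (leq_trans le2 le3).
  split=> //.
  have eqA : Wp r r H = 'O_r(H).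
    by apply/eqP; rewrite eqEcard Wp_pcore /= cA le2.
  have sylA : r.-Sylow(H) 'O_r(H) by rewrite pHallE pcore_sub cA /=.
  have hA : forall a h, a \in 'O_r(H) -> h \in H -> exists2 t, t \in 'O_r(H) & a ^ h = a ^ t.
    move=> a h Aa Hh; have := Aa; rewrite -{1}eqA inE => /and3P[Ha _ ra].
    exact: conj_in_Sylow sylA Ha ra Hh.
  have := Zk_sub (pcore_sub r H) hA m.
  have nilA := pgroup_nil (pcore_pgroup r H).
  have -> : 'Z_m('O_r(H)) = 'O_r(H).
    apply/ucn_nil_classP => //.
    apply: leq_trans (ltnW _) (subset_leq_card (pcore_sub r H)).
    by rewrite -nilpotent_class.
  by [].
have sQZ : 'O_pi(H) \subset 'Z_m(H).
  have d : #|'O_pi(H)| %| #|'O_pi(H) :&: 'Z_m(H)|.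
    apply/dvdn_partP => [|r rin]; first exact: cardG_gt0.
    have rpi : r \in pi := pnatPpi (pcore_pgroup pi H) rin.
    have pr : prime r by move: rin; rewrite mem_primes => /andP[].
    have [cA sAZ] := Ar r pr rpi.
    apply: (@dvdn_trans #|'O_r(H)|).
      by rewrite cA; apply: partn_dvd (cardG_gt0 _) (cardSg (pcore_sub _ _)).
    apply: cardSg; rewrite subsetI sAZ andbT.
    by apply: sub_pcore; exact: subr.
  have : 'O_pi(H) :&: 'Z_m(H) = 'O_pi(H).
    apply/eqP; rewrite eqEcard subsetIl /=.
    by apply: dvdn_leq d; apply: cardG_gt0.
  by move/setIidPl.
by exists 'O_pi(H)%G; split=> //; exists m.
Qed.
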